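(* Let $A\in\mathbb{R}^{m\times N}$, $K\subseteq[N]$, $0<\rho<1$ and $\tau>0$. The following are equivalent: (i) $A$ satisfies the robust binary null space property with constants $\rho,\tau$ relative to $K$; (ii) for all $x,z\in\mathbb{R}^N$ with $z-x\in H_K$, $\sum_{i\in K}x_i-\sum_{i\in K}z_i\le \rho\|(z-x)_{K^C}\|_1+\tau\|A(z-x)\|_2$; (iii) for all $z\in[0,1]^N$, $|K|-\|z_K\|_1\le\rho\|z_{K^C}\|_1+\tau\|A(z-\mathbb{1}_K)\|_2$.
   Context: $K^C=[N]\setminus K$; for $w\in\mathbb{R}^N$ and $S\subseteq[N]$, $w_S$ agrees with $w$ on $S$ and is zero elsewhere; $\mathbb{1}_K$ has entries $1$ on $K$, $0$ elsewhere. $H_K=\{w\in\mathbb{R}^N: w_i\le 0 \text{ for } i\in K,\ w_i\ge 0\text{ for } i\in K^C\}$. $A$ satisfies the robust binary null space property with constants $\rho,\tau$ relative to $K$ if $-\sum_{i\in K}v_i\le\rho\sum_{i\in K^C}v_i+\tau\|Av\|_2$ for every $v\in H_K$. *)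

(* Defs.v *)
From mathcomp Require Import all_boot all_order all_algebra.
From mathcomp Require Import reals.
Set Implicit Arguments. Unset Strict Implicit. Unset Printing Implicit Defensive.
Import Order.TTheory GRing.Theory Num.Theory.
Local Open Scope ring_scope.

Section Defs.
Variable R : realType.

Definition restr (N : nat) (w : 'cV[R]_N) (S : {set 'I_N}) : 'cV[R]_N :=
  \col_i (if i \in S then w i 0 else 0).

Definition norm1 (N : nat) (w : 'cV[R]_N) : R := \sum_i `|w i 0|.

Definition norm2 (m : nat) (v : 'cV[R]_m) : R := Num.sqrt (\sum_i (v i 0) ^+ 2).

Definition indic (N : nat) (K : {set 'I_N}) : 'cV[R]_N :=
  \col_i (if i \in K then 1 else 0).

Definition inH (N : nat) (K : {set 'I_N}) (w : 'cV[R]_N) : Prop :=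
  (forall i, i \in K -> w i 0 <= 0) /\ (forall i, i \in ~: K -> 0 <= w i 0).

Definition robust_binary_NSP (m N : nat) (A : 'M[R]_(m, N)) (K : {set 'I_N})
  (rho tau : R) : Prop :=
  forall v : 'cV[R]_N, inH K v ->
    - (\sum_(i in K) v i 0) <= rho * (\sum_(i in ~: K) v i 0) + tau * norm2 (A *m v).
End Defs.

(* Main.v *)
Require Import Defs.
From mathcomp Require Import all_boot all_order all_algebra.
From mathcomp Require Import reals.
From mathcomp Require Import lra.
Import Order.TTheory GRing.Theory Num.Theory.
Local Open Scope ring_scope.

Lemma norm1_restr (R : realType) N (w : 'cV[R]_N) (S : {set 'I_N}) :
  norm1 (restr w S) = \sum_(i in S) `|w i 0|.
Proof.
rewrite /norm1 [RHS]big_mkcond /=; apply: eq_bigr => i _; rewrite mxE.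
by case: ifP => //; rewrite normr0.
Qed.

Lemma norm2Z (R : realType) m (t : R) (w : 'cV[R]_m) : 0 <= t ->
  norm2 (t *: w) = t * norm2 w.
Proof.
move=> t0; rewrite /norm2.
have -> : \sum_i ((t *: w) i 0) ^+ 2 = t ^+ 2 * \sum_i (w i 0) ^+ 2.
  by rewrite mulr_sumr; apply: eq_bigr => i _; rewrite mxE exprMn.
by rewrite sqrtrM ?sqr_ge0 // sqrtr_sqr ger0_norm.
Qed.

Theorem lemma2p12 (R : realType) (m N : nat) (A : 'M[R]_(m, N)) (K : {set 'I_N})
  (rho tau : R) (hrho0 : 0 < rho) (hrho1 : rho < 1) (htau : 0 < tau) :
  (robust_binary_NSP A K rho tau <->
     (forall x z : 'cV[R]_N, inH K (z - x) ->
        (\sum_(i in K) x i 0) - (\sum_(i in K) z i 0)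
          <= rho * norm1 (restr (z - x) (~: K)) + tau * norm2 (A *m (z - x))))
  /\
  (robust_binary_NSP A K rho tau <->
     (forall z : 'cV[R]_N, (forall i, 0 <= z i 0 <= 1) ->
        (#|K|%:R : R) - norm1 (restr z K)
          <= rho * norm1 (restr z (~: K)) + tau * norm2 (A *m (z - indic R K)))).
Proof.
split; split.
- move=> H x z hv; have := H _ hv.
  rewrite norm1_restr.
  have -> : \sum_(i in ~: K) `|(z - x) i 0| = \sum_(i in ~: K) (z - x) i 0.
    by apply: eq_bigr => i iK; rewrite ger0_norm //; apply: hv.2.
  have -> : \sum_(i in K) x i 0 - \sum_(i in K) z i 0 = - \sum_(i in K) (z - x) i 0.
    rewrite -sumrB -sumrN; apply: eq_bigr => i _; rewrite !mxE; lra.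
  by [].
- move=> H v hv; have := H 0 v; rewrite subr0 => /(_ hv).
  rewrite norm1_restr big1 ?sub0r; last by move=> i _; rewrite mxE.
  have -> : \sum_(i in ~: K) `|v i 0| = \sum_(i in ~: K) v i 0.
    by apply: eq_bigr => i iK; rewrite ger0_norm //; apply: hv.2.
  by [].
- move=> H z hz.
  have hv : inH K (z - indic R K).
    split=> i; rewrite !mxE => iK.
      by rewrite iK; have := hz i; case/andP => _ ?; rewrite subr_le0.
    move: iK; rewrite in_setC => /negbTE ->; rewrite subr0; by case/andP: (hz i).
  have := H _ hv; rewrite !norm1_restr.
  have -> : \sum_(i in K) `|z i 0| = \sum_(i in K) z i 0.
    by apply: eq_bigr => i _; rewrite ger0_norm //; case/andP: (hz i).
  have -> : \sum_(i in ~: K) `|z i 0| = \sum_(i in ~: K) (z - indic R K) i 0.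
    apply: eq_bigr => i; rewrite in_setC => /negbTE iK.
    by rewrite !mxE iK subr0 ger0_norm //; case/andP: (hz i).
  have -> : (#|K|%:R : R) - \sum_(i in K) z i 0 = - \sum_(i in K) (z - indic R K) i 0.
    rewrite -sumr_const -sumrB -sumrN; apply: eq_bigr => i iK; rewrite !mxE iK; lra.
  by [].
- move=> H v hv.
  set s := \sum_i `|v i 0|.
  have s0 : 0 <= s by rewrite /s sumr_ge0.
  set t := (1 + s)^-1.
  have t0 : 0 < t by rewrite /t invr_gt0; lra.
  have tv : forall i, t * `|v i 0| <= 1.
    move=> i; have hi : `|v i 0| <= 1 + s.
      have : `|v i 0| <= s by rewrite /s (bigD1 i) //= lerDl sumr_ge0.
      lra.
    have := ler_wpM2l (ltW t0) hi; rewrite /t mulVf //.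
    by apply/negP => /eqP h; lra.
  have := H (indic R K + t *: v).
  have -> : indic R K + t *: v - indic R K = t *: v by rewrite addrC addKr.
  rewrite -scalemxAr norm2Z; last exact: ltW t0.
  rewrite !norm1_restr.
  have hz : forall i, 0 <= (indic R K + t *: v) i 0 <= 1.
    move=> i; rewrite !mxE; have := tv i; case: ifP => iK.
      have := hv.1 i iK; move=> h1; rewrite ler0_norm // => h2.
      apply/andP; split; nra.
    have := hv.2 i; rewrite in_setC iK => /(_ isT) h1.
    rewrite ger0_norm // add0r => h2; apply/andP; split; nra.
  move/(_ hz).
  have -> : \sum_(i in K) `|(indic R K + t *: v) i 0| = \sum_(i in K) (1 + t * v i 0).
    apply: eq_bigr => i iK; rewrite ger0_norm; first by rewrite !mxE iK.
    by case/andP: (hz i).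
  have -> : \sum_(i in ~: K) `|(indic R K + t *: v) i 0| = t * \sum_(i in ~: K) v i 0.
    rewrite mulr_sumr; apply: eq_bigr => i iK.
    rewrite ger0_norm; last by case/andP: (hz i).
    by move: iK; rewrite in_setC !mxE => /negbTE ->; rewrite add0r.
  rewrite big_split /= sumr_const -mulr_sumr opprD addrA subrr add0r.
  rewrite mulrCA -mulrN (mulrCA tau) -mulrDr ler_pM2l //.
Qed.
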